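(* Let $n,d\ge1$. For $k\ge1$ let $\mathbf M_k\in\mathbb R^{n\times n}$ be invertible; for $k\ge0$ let $\mathbf H_k\in\mathbb R^{d\times n}$, $\mathbf R_k$ symmetric positive definite, ${\boldsymbol\Omega}_k=\mathbf H_k^{\mathrm T}\mathbf R_k^{-1}\mathbf H_k$. Let $\mathbf M_{k:0}=\mathbf M_k\cdots\mathbf M_1$ ($\mathbf M_{0:0}=\mathbf I_n$), let $\mathbf P_0$ be symmetric positive semi-definite and $\mathbf P_{k+1}=\mathbf M_{k+1}(\mathbf I_n+\mathbf P_k{\boldsymbol\Omega}_k)^{-1}\mathbf P_k\mathbf M_{k+1}^{\mathrm T}$ for $k\ge0$. Then for every $k\ge0$, $\mathrm{rank}(\mathbf P_{k+1})=\mathrm{rank}(\mathbf P_k)$ and $$\mathrm{Im}(\mathbf P_k)=\mathbf M_{k:0}\big(\mathrm{Im}(\mathbf P_0)\big),$$ where $\mathrm{Im}(\mathbf A)=\{\mathbf A{\mathbf x}:{\mathbf x}\in\mathbb R^n\}$ is the column space. *)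

(* Defs.v *)
From mathcomp Require Import all_boot all_order all_algebra.
Set Implicit Arguments. Unset Strict Implicit. Unset Printing Implicit Defensive.
Import Order.TTheory GRing.Theory Num.Theory.
Local Open Scope ring_scope.

Definition sym_pd (R : realFieldType) (m : nat) (A : 'M[R]_m) : Prop :=
  A^T = A /\ forall x : 'cV[R]_m, x != 0 -> 0 < (x^T *m A *m x) ord0 ord0.

Definition sym_psd (R : realFieldType) (m : nat) (A : 'M[R]_m) : Prop :=
  A^T = A /\ forall x : 'cV[R]_m, 0 <= (x^T *m A *m x) ord0 ord0.

Definition Omega (R : realFieldType) (n d : nat)
  (H : nat -> 'M[R]_(d, n)) (Rm : nat -> 'M[R]_d) (k : nat) : 'M[R]_n :=
  (H k)^T *m invmx (Rm k) *m H k.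

Fixpoint Mprod (R : realFieldType) (n : nat) (M : nat -> 'M[R]_n) (k : nat)
  : 'M[R]_n :=
  match k with
  | 0 => 1%:M
  | k'.+1 => M k'.+1 *m Mprod M k'
  end.

Fixpoint Pseq (R : realFieldType) (n d : nat) (M : nat -> 'M[R]_n)
  (H : nat -> 'M[R]_(d, n)) (Rm : nat -> 'M[R]_d) (P0 : 'M[R]_n) (k : nat)
  : 'M[R]_n :=
  match k with
  | 0 => P0
  | k'.+1 => let Pk := Pseq M H Rm P0 k' in
      M k'.+1 *m invmx (1%:M + Pk *m Omega H Rm k') *m Pk *m (M k'.+1)^T
  end.

(* column space Im(A) = {A x}; compared via the row spaces of transposes *)
Definition colspace_eq (R : fieldType) (m p q : nat)
  (A : 'M[R]_(m, p)) (B : 'M[R]_(m, q)) : Prop := (A^T == B^T)%MS.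

(* Main.v *)
Require Import Defs.
From mathcomp Require Import all_boot all_order all_algebra.
Import Order.TTheory GRing.Theory Num.Theory.
Set Implicit Arguments. Unset Strict Implicit.
Local Open Scope ring_scope.

Lemma psd_row (R : realFieldType) (m : nat) (A : 'M[R]_m) (u : 'rV[R]_m) :
  sym_psd A -> 0 <= (u *m A *m u^T) ord0 ord0.
Proof. by move=> [_ h]; have := h u^T; rewrite trmxK. Qed.

Lemma pd_row (R : realFieldType) (m : nat) (A : 'M[R]_m) (u : 'rV[R]_m) :
  sym_pd A -> u != 0 -> 0 < (u *m A *m u^T) ord0 ord0.
Proof. by move=> [_ h] u0; have := h u^T; rewrite trmxK trmx_eq0; apply. Qed.

Lemma pd_unit (R : realFieldType) (m : nat) (A : 'M[R]_m) :
  sym_pd A -> A \in unitmx.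
Proof.
move=> hA; rewrite unitmxE unitfE; apply/negP => /det0P [v vn0 vA0].
by have := pd_row hA vn0; rewrite vA0 mul0mx mxE ltxx.
Qed.

Lemma pd_inv (R : realFieldType) (m : nat) (A : 'M[R]_m) :
  sym_pd A -> sym_pd (invmx A).
Proof.
move=> hA; have uA := pd_unit hA; have [sA pA] := hA.
split; first by rewrite trmx_inv sA.
move=> x xn0; set y := invmx A *m x.
have xe : x = A *m y by rewrite /y mulmxA mulmxV // mul1mx.
have yn0 : y^T != 0.
  by rewrite trmx_eq0; apply: contraNneq xn0 => y0; rewrite xe y0 mulmx0.
have := pd_row hA yn0; rewrite trmxK.
suff -> : x^T *m invmx A *m x = y^T *m A *m y by [].
rewrite {1}xe trmx_mul sA -!mulmxA; congr (_ *m _).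
Qed.

Lemma Omega_sym (R : realFieldType) (n d : nat) (H : nat -> 'M[R]_(d, n))
  (Rm : nat -> 'M[R]_d) k : sym_pd (Rm k) -> (Omega H Rm k)^T = Omega H Rm k.
Proof.
move=> [sR _]; rewrite /Omega !trmx_mul trmxK trmx_inv sR mulmxA //.
Qed.

Lemma Omega_row (R : realFieldType) (n d : nat) (H : nat -> 'M[R]_(d, n))
  (Rm : nat -> 'M[R]_d) k (u : 'rV[R]_n) : sym_pd (Rm k) ->
  0 <= (u *m Omega H Rm k *m u^T) ord0 ord0 /\
  ((u *m Omega H Rm k *m u^T) ord0 ord0 = 0 -> u *m Omega H Rm k = 0).
Proof.
move=> hR; have hI := pd_inv hR.
have e : u *m Omega H Rm k *m u^T =
   (u *m (H k)^T) *m invmx (Rm k) *m (u *m (H k)^T)^T.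
  by rewrite /Omega trmx_mul trmxK !mulmxA.
rewrite e; have [w0|wn0] := eqVneq (u *m (H k)^T) 0.
  split; first by rewrite w0 !mul0mx mxE.
  by move=> _; rewrite /Omega !mulmxA w0 !mul0mx.
have := pd_row hI wn0; split; first exact: ltW.
by move=> h0; move: (pd_row hI wn0); rewrite h0 ltxx.
Qed.

Lemma step_unit (R : realFieldType) (n d : nat) (H : nat -> 'M[R]_(d, n))
  (Rm : nat -> 'M[R]_d) k (P : 'M[R]_n) : sym_pd (Rm k) -> sym_psd P ->
  (1%:M + P *m Omega H Rm k) \in unitmx.
Proof.
move=> hR hP; set O := Omega H Rm k.
rewrite unitmxE unitfE; apply/negP => /det0P [v vn0 vA0].
move: vA0; rewrite mulmxDr mulmx1 => /eqP; rewrite addrC addr_eq0 mulmxA => /eqP ve.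
set u := v *m P.
have [q0 q0P] := Omega_row H u hR; rewrite -/O in q0 q0P.
have hv := psd_row v hP.
have e : u *m O *m u^T = - (v *m P *m v^T).
  by rewrite ve mulNmx /u trmx_mul (proj1 hP) mulmxA.
have qz : (u *m O *m u^T) ord0 ord0 = 0.
  apply/eqP; rewrite eq_le q0 andbT e mxE oppr_le0 //.
move: (q0P qz); rewrite ve => /eqP; rewrite oppr_eq0 => /eqP v0.
by rewrite v0 eqxx in vn0.
Qed.

Lemma push (R : realFieldType) (n : nat) (P O : 'M[R]_n) :
  P^T = P -> O^T = O -> (1%:M + P *m O) \in unitmx ->
  invmx (1%:M + P *m O) *m P = P *m invmx (1%:M + P *m O)^T.
Proof.
move=> sP sO uA; set A := 1%:M + P *m O.
have uAt : A^T \in unitmx by rewrite unitmx_tr.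
have e : A *m P = P *m A^T.
  by rewrite /A linearD /= trmx1 trmx_mul sP sO mulmxDl mulmxDr mul1mx mulmx1 mulmxA.
rewrite -[LHS]mulmx1 -(mulmxV uAt) !mulmxA -[invmx A *m P *m A^T]mulmxA -e.
by rewrite mulmxA mulVmx // mul1mx.
Qed.

Lemma Pstep (R : realFieldType) (n d : nat)
  (M : nat -> 'M[R]_n) (H : nat -> 'M[R]_(d, n)) (Rm : nat -> 'M[R]_d)
  (P0 : 'M[R]_n) k : sym_pd (Rm k) -> sym_psd (Pseq M H Rm P0 k) ->
  Pseq M H Rm P0 k.+1 = M k.+1 *m (Pseq M H Rm P0 k *m
     invmx (1%:M + Pseq M H Rm P0 k *m Omega H Rm k)^T) *m (M k.+1)^T.
Proof.
move=> hR hP /=; rewrite -push //; last exact: step_unit.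
- by rewrite !mulmxA.
- exact: proj1 hP.
- exact: Omega_sym.
Qed.

Lemma Ppsd (R : realFieldType) (n d : nat)
  (M : nat -> 'M[R]_n) (H : nat -> 'M[R]_(d, n)) (Rm : nat -> 'M[R]_d)
  (P0 : 'M[R]_n) : (forall k, sym_pd (Rm k)) -> sym_psd P0 ->
  forall k, sym_psd (Pseq M H Rm P0 k).
Proof.
move=> hR hP0; elim=> [//|k IH]; rewrite (Pstep (hR k) IH).
set P := Pseq M H Rm P0 k; set O := Omega H Rm k; set A := 1%:M + P *m O.
have [sP pP] := IH; have sO : O^T = O by exact: Omega_sym.
have uA : A \in unitmx by exact: step_unit.
have uAt : A^T \in unitmx by rewrite unitmx_tr.
split.
  by rewrite !trmx_mul !trmxK trmx_inv trmxK sP push // !mulmxA.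
move=> x; set y := (M k.+1)^T *m x.
have -> : x^T *m (M k.+1 *m (P *m invmx A^T) *m (M k.+1)^T) *m x
   = y^T *m P *m (invmx A^T *m y).
  by rewrite /y trmx_mul trmxK !mulmxA.
set z := invmx A^T *m y.
have ye : y = A^T *m z by rewrite /z mulmxA mulmxV // mul1mx.
rewrite ye trmx_mul trmxK /A mulmxDr mulmx1 !mulmxDl mxE.
apply: addr_ge0; first by have [_ h] := IH; exact: h.
have [_ hO] : sym_psd O.
  split=> // w; have [h _] := Omega_row H w^T (hR k); by rewrite trmxK in h.
have := hO (P *m z); rewrite trmx_mul sP !mulmxA.
by rewrite -!mulmxA.
Qed.

Theorem mainTheorem4 (R : realFieldType) (n d : nat)
  (M : nat -> 'M[R]_n) (H : nat -> 'M[R]_(d, n)) (Rm : nat -> 'M[R]_d)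
  (P0 : 'M[R]_n) :
  (0 < n)%N -> (0 < d)%N ->
  (forall k, (1 <= k)%N -> M k \in unitmx) ->
  (forall k, sym_pd (Rm k)) ->
  sym_psd P0 ->
  forall k : nat,
    \rank (Pseq M H Rm P0 k.+1) = \rank (Pseq M H Rm P0 k) /\
    colspace_eq (Pseq M H Rm P0 k) (Mprod M k *m P0).
Proof.
move=> _ _ hM hR hP0.
have stepk : forall k, \rank (Pseq M H Rm P0 k.+1) = \rank (Pseq M H Rm P0 k) /\
   (forall B : 'M[R]_n, colspace_eq (Pseq M H Rm P0 k) B ->
      colspace_eq (Pseq M H Rm P0 k.+1) (M k.+1 *m B)).
  move=> k; have IH := @Ppsd _ _ _ M H Rm P0 hR hP0 k.
  rewrite (Pstep (hR k) IH).
  set P := Pseq M H Rm P0 k; set O := Omega H Rm k; set A := 1%:M + P *m O.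
  have [sP pP] := IH; have sO : O^T = O by exact: Omega_sym.
  have uA : A \in unitmx by exact: step_unit.
  have uAt : A^T \in unitmx by rewrite unitmx_tr.
  have uM : M k.+1 \in unitmx by exact: hM.
  split.
    rewrite mxrankMfree; last by rewrite row_free_unit unitmx_tr.
    rewrite mulmxA mxrankMfree; last by rewrite row_free_unit unitmx_inv.
    by rewrite eqmxMfull // row_full_unit.
  move=> B /eqmxP hB; apply/eqmxP; rewrite /colspace_eq.
  rewrite !trmx_mul !trmxK trmx_inv trmxK -!mulmxA mulmxA.
  apply: eqmx_trans (eqmxMfull _ _) _.
    by rewrite row_full_unit unitmx_mul uM unitmx_inv.
  exact: eqmxMr.
elim=> [|k IH].
  split; first exact: (proj1 (stepk 0%N)).
  by rewrite /colspace_eq /= mul1mx; apply/eqmxP.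
split; first exact: (proj1 (stepk k.+1)).
have -> : Mprod M k.+1 *m P0 = M k.+1 *m (Mprod M k *m P0) by rewrite [Mprod M k.+1]/= mulmxA.
exact: (proj2 (stepk k) _ (proj2 IH)).
Qed.
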